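(* There exists a constant $\widetilde c>0$ such that for all $N$ large enough, all $n\in\mathbb{Z}_+$ and every initial law of $X(0)$, a Markov chain $X$ on $\{0,\dots,N-4\}$ with kernel $\check P$ satisfies $$\mathbb{P}[\tau_0^X>n]\le e^{1-\widetilde c n/N^3},\qquad \tau_0^X=\inf\{n\in\mathbb{Z}_+: X(n)=0\}.$$
   Context: For $\sigma\in\mathcal{S}_N$ let $\eta_1(\sigma)$, $\eta_2(\sigma)$ be its numbers of fixed points and 2-cycles, $\nu$ the uniform measure on $\mathcal{S}_N$ and $p(x)=\mathbb{E}_\nu[\eta_2\mid\eta_1=x]$. $\check P$ is the birth–death Markov kernel on $\{0,\dots,N-4\}$ with $\check P(x,x-1)=\frac{x(N-x)}{N(N-1)}$, $\check P(x,x+1)=\frac{N-x-2p(x)}{N(N-1)}$ for $x\le N-5$, all other off-diagonal entries $0$, and diagonal entries making rows sum to 1. *)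

(* Defs.v *)
From HB Require Import structures.
From mathcomp Require Import all_boot all_order all_algebra all_fingroup.
From mathcomp Require Import all_classical all_reals.
From mathcomp Require Import topology normedtype sequences.
Set Implicit Arguments. Unset Strict Implicit. Unset Printing Implicit Defensive.
Import Order.TTheory GRing.Theory Num.Theory.
Local Open Scope ring_scope.

Definition eta1 (N : nat) (s : 'S_N) : nat := #|[set i | s i == i]|.

Definition eta2 (N : nat) (s : 'S_N) : nat :=
  #|[set C in porbits s | #|C| == 2%N]|.

(* p(x) = E_nu[eta2 | eta1 = x], nu uniform on S_N *)
Definition pcond (R : realType) (N x : nat) : R :=
  (\sum_(s : 'S_N | eta1 s == x) (eta2 s)%:R) / (#|[set s : 'S_N | eta1 s == x]|)%:R.

(* States {0,...,N-4} represented by 'I_(N-3). *)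
Definition down_rate (R : realType) (N x : nat) : R :=
  if (0 < x)%N then (x * (N - x))%:R / (N * (N - 1))%:R else 0.

Definition up_rate (R : realType) (N x : nat) : R :=
  if (x <= N - 5)%N then
    ((N%:R - x%:R - 2 * pcond R N x) / (N * (N - 1))%:R) else 0.

Definition checkP (R : realType) (N : nat) (x y : 'I_(N - 3)) : R :=
  if y == x then 1 - down_rate R N x - up_rate R N x
  else if (y : nat) == x.-1 then down_rate R N x
  else if (y : nat) == x.+1 then up_rate R N x
  else 0.

(* P[tau_0 > n] for the Markov chain with kernel checkP and initial law mu:
   the probability (under the law of the chain) that X(0),...,X(n) are all
   different from 0. *)
Definition survival (R : realType) (N n : nat) (mu : 'I_(N - 3) -> R) : R :=
  \sum_(w : {ffun 'I_n.+1 -> 'I_(N - 3)} | [forall i, (w i : nat) != 0%N])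
     mu (w ord0) * \prod_(i < n) checkP R (w (inord i)) (w (inord i.+1)).

(* Main.v *)
Require Import Defs.
From HB Require Import structures.
From mathcomp Require Import all_boot all_order all_algebra all_fingroup.
From mathcomp Require Import all_classical all_reals.
From mathcomp Require Import topology normedtype sequences exp.
From mathcomp Require Import lra zify ring.
Import Order.TTheory GRing.Theory Num.Theory.
Local Open Scope ring_scope.

Lemma eta_bound N (s : 'S_N) : (2 * eta2 s + eta1 s <= N)%N.
Proof.
rewrite /eta2 /eta1.
set Q := [set C in porbits s | #|C| == 2%N].
have E2 : (2 * #|Q| = \sum_(C in Q) #|C|)%N.
  rewrite mulnC -sum_nat_const; apply: eq_bigr => C; rewrite inE => /andP[_ /eqP ->] //.
have E3 : (\sum_(C in Q) #|C| = \sum_(i < N) \sum_(C in Q) (i \in C))%N.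
  rewrite exchange_big /=; apply: eq_bigr => C _.
  by rewrite -sum1_card big_mkcond /=; apply: eq_bigr => i _; case: (i \in C).
have E1 : #|[set i | s i == i]| = (\sum_(i < N) (s i == i))%N.
  by rewrite -sum1_card big_mkcond /=; apply: eq_bigr => i _; rewrite inE; case: (s i == i).
rewrite E2 E3 E1 -big_split /=.
apply: (@leq_trans (\sum_(i < N) 1)%N); last by rewrite sum1_card card_ord.
apply: leq_sum => i _.
have sub : forall C, C \in Q -> i \in C -> C = porbit s i.
  move=> C; rewrite inE => /andP[/imsetP[y _ ->] _] hi.
  by apply/eqP; rewrite eq_sym eq_porbit_mem.
case: (boolP (s i == i)) => [/eqP hfix|nfix].
  rewrite big1 //= => C CQ; case: (boolP (i \in C)) => // hi.
  have := CQ; rewrite (sub C CQ hi) inE => /andP[_ /eqP c2].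
  have : (#|porbit s i| <= 1)%N.
    rewrite -(cards1 i); apply: subset_leq_card; apply/fintype.subsetP => y /porbitP[k ->].
    by rewrite permX (iter_fix _ hfix) set11.
  by rewrite c2.
rewrite addn0.
apply: (@leq_trans (\sum_(C : {set 'I_N}) (C == porbit s i))%N).
  rewrite [X in (X <= _)%N]big_mkcond /=; apply: leq_sum => C _.
  case: (boolP (C \in Q)) => // CQ; case: (boolP (i \in C)) => // hi.
  by rewrite (sub C CQ hi) eqxx.
by rewrite -big_mkcond /= big_pred1_eq.
Qed.

Section S.
Variable R : realType.

Lemma survivalS N n (mu : 'I_(N - 3) -> R) :
  @survival R N n.+1 mu =
  @survival R N n (fun y => \sum_(x : 'I_(N - 3) | (x : nat) != 0%N) mu x * checkP R x y).
Proof.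
rewrite /survival.
pose T := 'I_(N - 3).
pose cns (p : T * {ffun 'I_n.+1 -> T}) : {ffun 'I_n.+2 -> T} :=
  [ffun j => if unlift ord0 j is Some k then p.2 k else p.1].
pose tl (w : {ffun 'I_n.+2 -> T}) := (w ord0, [ffun k => w (lift ord0 k)]).
have cK : cancel cns tl.
  case=> x w; rewrite /tl /cns /= ffunE unlift_none; congr pair.
  by apply/ffunP => k; rewrite !ffunE liftK.
have tK : cancel tl cns.
  move=> w; apply/ffunP => j; rewrite /cns /tl ffunE.
  by case: (unliftP ord0 j) => [k ->|->] /=; rewrite ?ffunE.
have cl j : cns^~ (lift ord0 j) =1 fun p => p.2 j.
  by move=> p; rewrite ffunE liftK.
have c0 : cns^~ ord0 =1 fun p => p.1.
  by move=> p; rewrite ffunE unlift_none.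
have Hl k : (k < n.+1)%N -> (inord k.+1 : 'I_n.+2) = lift ord0 (inord k).
  by move=> hk; apply: val_inj; rewrite /= /bump leq0n add1n !inordK.
rewrite (reindex cns); last by exists tl => w _; [apply: cK | apply: tK].
have -> : \sum_(w : {ffun 'I_n.+1 -> T} | [forall i, (w i : nat) != 0%N])
      (\sum_(x : 'I_(N - 3) | (x : nat) != 0%N) mu x * checkP R x (w ord0)) *
      \prod_(i < n) checkP R (w (inord i)) (w (inord i.+1)) =
  \sum_(p : T * {ffun 'I_n.+1 -> T} | ((p.1 : nat) != 0%N) && [forall i, (p.2 i : nat) != 0%N])
     mu p.1 * checkP R p.1 (p.2 ord0) *
      \prod_(i < n) checkP R (p.2 (inord i)) (p.2 (inord i.+1)).
  under eq_bigr do rewrite big_distrl.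
  by rewrite exchange_big pair_big /=.
apply: eq_big => [p|p _].
  apply/forallP/andP => [H|[H1 /forallP H2] i].
    split; first by have := H ord0; rewrite c0.
    by apply/forallP => k; have := H (lift ord0 k); rewrite cl.
  by case: (unliftP ord0 i) => [k ->|->]; rewrite ?cl ?c0.
rewrite c0 big_ord_recl -mulrA; congr (_ * (_ * _)).
  have -> : (inord 0 : 'I_n.+2) = ord0 by apply: val_inj; rewrite /= inordK.
  have -> : (inord 1 : 'I_n.+2) = lift ord0 ord0.
    by apply: val_inj; rewrite /= inordK.
  by rewrite c0 cl.
apply: eq_bigr => i _.
have hi : (i < n.+1)%N by apply: leq_trans (ltn_ord i) _.
have hi' : (i.+1 < n.+1)%N by rewrite ltnS.
rewrite /= /bump leq0n add1n Hl // Hl // cl cl.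
done.
Qed.


Lemma survival0 N (mu : 'I_(N - 3) -> R) :
  @survival R N 0 mu = \sum_(x : 'I_(N - 3) | (x : nat) != 0%N) mu x.
Proof.
rewrite /survival.
pose T := 'I_(N - 3).
pose c (x : T) : {ffun 'I_1 -> T} := [ffun=> x].
have cK : cancel c (fun w => w ord0) by move=> x; rewrite ffunE.
have Kc : cancel (fun w : {ffun 'I_1 -> T} => w ord0) c.
  by move=> w; apply/ffunP => i; rewrite ffunE (ord1 i).
rewrite (reindex c); last by exists (fun w : {ffun 'I_1 -> T} => w ord0) => w _; [apply: cK|apply: Kc].
apply: eq_big => [x|x _]; last by rewrite big_ord0 mulr1 ffunE.
apply/forallP/idP => [H|H i]; first by have := H ord0; rewrite ffunE.
by rewrite ffunE.
Qed.

Lemma pcond_ge0 N x : 0 <= pcond R N x.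
Proof. by rewrite /pcond divr_ge0 // sumr_ge0. Qed.

Lemma pcond_le N x : (x <= N)%N -> 2 * pcond R N x <= N%:R - x%:R.
Proof.
move=> hx.
rewrite /pcond.
set c := #|[set s : 'S_N | eta1 s == x]|.
have hnat : (2 * \sum_(s : 'S_N | eta1 s == x) eta2 s <= c * (N - x))%N.
  rewrite big_distrr /=.
  have -> : (c * (N - x) = \sum_(s in [set s : 'S_N | eta1 s == x]) (N - x))%N.
    by rewrite sum_nat_const.
  rewrite [X in (_ <= X)%N](eq_bigl (fun s : 'S_N => eta1 s == x)); last by move=> s; rewrite inE.
  apply: leq_sum => s /eqP hs; have := @eta_bound N s; rewrite -hs; lia.
have hr : 2 * (\sum_(s : 'S_N | eta1 s == x) (eta2 s)%:R) <= c%:R * (N%:R - x%:R) :> R.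
  rewrite -natrB // -natrM -natr_sum -(natrM R 2) ler_nat //.
case: (posnP c) => [c0|cpos].
  by rewrite c0 invr0 mulr0 mulr0 subr_ge0 ler_nat.
rewrite mulrA ler_pdivrMr ?ltr0n //. by rewrite [_ * c%:R]mulrC.

Qed.

Definition Hf (N k : nat) : R := (N%:R + k%:R - 1) / N%:R.

Lemma down_eq N x : (0 < x)%N -> (x <= N)%N ->
  down_rate R N x = x%:R * ((N%:R - x%:R) / (N%:R * (N%:R - 1))).
Proof.
move=> h0 hx; have hN : (1 <= N)%N by apply: leq_trans hx.
by rewrite /down_rate h0 natrM natrB // natrM natrB // mulrA.
Qed.

Lemma up_le N x : (x <= N)%N -> (1 < N)%N ->
  up_rate R N x <= (N%:R - x%:R) / (N%:R * (N%:R - 1)).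
Proof.
move=> hx hN; have D0 : 0 < N%:R * (N%:R - 1) :> R.
  by rewrite mulr_gt0 ?ltr0n ?subr_gt0 ?ltr1n // ltnW.
rewrite /up_rate; case: ifP => _.
  rewrite natrM natrB ?(ltnW hN) //.
  rewrite ler_pM2r ?invr_gt0 //; have := pcond_ge0 N x; lra.
by rewrite divr_ge0 ?subr_ge0 ?ler_nat // ltW.
Qed.

Lemma up_ge0 N x : (x <= N)%N -> 0 <= up_rate R N x.
Proof.
move=> hx; rewrite /up_rate; case: ifP => _ //.
by rewrite divr_ge0 //; have := @pcond_le N x hx; lra.
Qed.

Lemma up_0 N x : ~~ (x <= N - 5)%N -> up_rate R N x = 0.
Proof. by rewrite /up_rate => /negbTE ->. Qed.

Lemma sum_ord_eq m k (F : nat -> R) :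
  \sum_(y < m) (if (y : nat) == k then F y else 0) = if (k < m)%N then F k else 0.
Proof.
case: ltnP => hk.
  rewrite (bigD1 (Ordinal hk)) //= eqxx big1 ?addr0 // => y hy.
  case: eqP => // hyk; case/eqP: hy; exact: val_inj.
by rewrite big1 // => y _; case: eqP => // hyk; move: (ltn_ord y); rewrite hyk ltnNge hk.
Qed.

Lemma sum_ord_eqc m k (c : R) :
  \sum_(y < m) (if (y : nat) == k then c else 0) = if (k < m)%N then c else 0.
Proof. exact: (@sum_ord_eq m k (fun _ => c)). Qed.

Lemma ifmul (k j : nat) (A : R) (G : nat -> R) :
  (if k == j then A else 0) * G k = if k == j then A * G j else 0.
Proof. by case: eqP => [->|_]; rewrite ?mul0r. Qed.

Lemma checkP_split N (x y : 'I_(N - 3)) : (0 < x)%N ->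
  checkP R x y =
   (if (y : nat) == x then 1 - down_rate R N x - up_rate R N x else 0)
   + (if (y : nat) == x.-1 then down_rate R N x else 0)
   + (if (y : nat) == x.+1 then up_rate R N x else 0).
Proof.
move=> hx; rewrite /checkP -val_eqE /=.
move: (y : nat) => k.
case: (k =P x) => h1; case: (k =P x.-1) => h2; case: (k =P x.+1) => h3;
  rewrite ?addr0 ?add0r //; exfalso; lia.
Qed.

Lemma arith2 (n X W u : R) : 10 <= n -> 2 <= X -> X + 4 <= n -> 0 <= W ->
  W * (n * (n - 1)) = n - X -> u <= W ->
  (1 - X * W - u) * ((n + X - 1) / n) + X * W * ((n + (X - 1) - 1) / n)
   + u * ((n + (X + 1) - 1) / n) <= (1 - (n ^+ 3)^-1) * ((n + X - 1) / n).
Proof.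
move=> hn hX hXn hW hWD hup.
have n0 : n != 0 by apply/eqP; lra.
have key : n + X - 1 <= (X * W - u) * n ^+ 3.
  have h1 : W <= X * W - u by nra.
  have h2 : n + X - 1 <= W * n ^+ 3 by rewrite !exprS expr0; nra.
  apply: le_trans h2 _; rewrite ler_pM2r //; apply: exprn_gt0; lra.
rewrite -subr_ge0.
have -> : (1 - (n ^+ 3)^-1) * ((n + X - 1) / n) -
   ((1 - X * W - u) * ((n + X - 1) / n) + X * W * ((n + (X - 1) - 1) / n)
   + u * ((n + (X + 1) - 1) / n)) = ((X * W - u) * n ^+ 3 - (n + X - 1)) / n ^+ 4.
  by field.
by rewrite divr_ge0 ?subr_ge0 // exprn_ge0 //; lra.
Qed.

Lemma arith1 (n W u : R) : 10 <= n -> 0 <= W ->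
  W * (n * (n - 1)) = n - 1 -> u <= W ->
  (1 - 1 * W - u) * ((n + 1 - 1) / n) + 1 * W * 0
   + u * ((n + (1 + 1) - 1) / n) <= (1 - (n ^+ 3)^-1) * ((n + 1 - 1) / n).
Proof.
move=> hn hW hWD hup.
have n0 : n != 0 by apply/eqP; lra.
have Wn : W * n = 1.
  apply: (@mulIf _ (n - 1)); first by apply/eqP; lra.
  by rewrite -mulrA hWD mul1r.
have key : 1 <= W * n ^+ 3 - u * n ^+ 2 by rewrite !exprS expr0; nra.
rewrite -subr_ge0.
have -> : (1 - (n ^+ 3)^-1) * ((n + 1 - 1) / n) -
   ((1 - 1 * W - u) * ((n + 1 - 1) / n) + 1 * W * 0
   + u * ((n + (1 + 1) - 1) / n)) = (W * n ^+ 3 - u * n ^+ 2 - 1) / n ^+ 3.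
  by field.
by rewrite divr_ge0 ?subr_ge0 // exprn_ge0 //; lra.
Qed.

Lemma Wfacts N x : (10 <= N)%N -> (x <= N)%N ->
  let W := (N%:R - x%:R) / (N%:R * (N%:R - 1)) : R in
  0 <= W /\ W * (N%:R * (N%:R - 1)) = N%:R - x%:R.
Proof.
move=> HN hx W.
have hn : 10 <= N%:R :> R by rewrite ler_nat.
have D0 : 0 < N%:R * (N%:R - 1) :> R by nra.
split; first by rewrite divr_ge0 ?subr_ge0 ?ler_nat // ltW.
by rewrite /W divfK // lt0r_neq0.
Qed.

Lemma checkP_ge0 N (HN : (10 <= N)%N) (x y : 'I_(N - 3)) : (0 < x)%N ->
  0 <= checkP R x y.
Proof.
move=> hx; rewrite checkP_split //.
have hxN : (x + 4 <= N)%N by have := ltn_ord x; lia.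
have hx' : (x <= N)%N by lia.
have hn : 10 <= N%:R :> R by rewrite ler_nat.
have hX : 1 <= x%:R :> R by rewrite (ler_nat R 1 x).
have hXn : x%:R + 4 <= N%:R :> R by rewrite -natrD ler_nat.
have [hW hWD] := @Wfacts N x HN hx'.
have hup := @up_le N x hx' (leq_trans (isT : (1 < 10)%N) HN).
have hup0 := @up_ge0 N x hx'.
rewrite (@down_eq N x hx hx').
apply: addr_ge0; [apply: addr_ge0|]; case: ifP => _ //.
- set W := (N%:R - x%:R) / (N%:R * (N%:R - 1)) in hW hWD hup *.
  set u := up_rate R N x in hup hup0 *.
  set n := N%:R in hn hXn hWD *; set X := x%:R in hX hXn hWD *.
  have hD : 0 < n * (n - 1) by nra.
  have : (X + 1) * W <= 1.
    rewrite -(ler_pM2r hD) mul1r -mulrA hWD; nra.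
  nra.
- by apply: mulr_ge0; lra.
Qed.

Lemma key N (HN : (10 <= N)%N) (x : 'I_(N - 3)) : (0 < x)%N ->
  \sum_(y : 'I_(N - 3) | (y : nat) != 0%N) checkP R x y * Hf N y
    <= (1 - (N%:R ^+ 3)^-1) * Hf N x.
Proof.
move=> hx.
have hxN : (x + 4 <= N)%N by have := ltn_ord x; lia.
have hx' : (x <= N)%N by lia.
set G := fun k : nat => if k == 0%N then 0 else Hf N k.
rewrite big_mkcond /=.
rewrite (eq_bigr (fun y : 'I_(N - 3) => checkP R x y * G y)); last first.
  by move=> y _; rewrite /G; case: eqP => _; rewrite ?mulr0.
under eq_bigr do rewrite checkP_split // !mulrDl !ifmul.
rewrite !big_split /= !sum_ord_eqc ltn_ord.
have -> : (x.-1 < N - 3)%N = true by have := ltn_ord x; lia.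
set d := down_rate R N x; set u := up_rate R N x.
have -> : (if (x.+1 < N - 3)%N then u * G x.+1 else 0) = u * Hf N x.+1.
  case: ltnP => h; first by [].
  by rewrite /u up_0 ?mul0r //; rewrite -ltnNge; lia.
have -> : G x = Hf N x by rewrite /G; case: eqP => //; lia.
have hn : 10 <= N%:R :> R by rewrite ler_nat.
have hXn : x%:R + 4 <= N%:R :> R by rewrite -natrD ler_nat.
have [hW hWD] := @Wfacts N x HN hx'.
have hup := @up_le N x hx' (leq_trans (isT : (1 < 10)%N) HN).
rewrite /d (@down_eq N x hx hx') /Hf -natr1.
set W := (N%:R - x%:R) / (N%:R * (N%:R - 1)) in hW hWD hup *.
case: (ltngtP x 1) => hx1; first by lia.
- have hX : 2 <= x%:R :> R by rewrite (ler_nat R 2 x).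
  rewrite /G (_ : (x.-1 == 0%N) = false); last by apply/eqP; lia.
  rewrite /Hf -subn1 natrB; last by lia.
  by apply: arith2.
- rewrite /G hx1 /= in hW hWD hXn *.
  exact: arith1 hn hW hWD hup.
Qed.

Lemma a_bounds N : (10 <= N)%N ->
  0 <= 1 - (N%:R ^+ 3)^-1 :> R /\ 0 < N%:R ^+ 3 :> R.
Proof.
move=> HN; have hn : 10 <= N%:R :> R by rewrite ler_nat.
have h3 : 1 <= N%:R ^+ 3 :> R by rewrite exprn_ege1 //; lra.
split; last lra.
rewrite subr_ge0 invf_le1 //; lra.
Qed.

Lemma Hf_bounds N (x : nat) : (10 <= N)%N -> (0 < x)%N -> (x <= N)%N ->
  1 <= Hf N x /\ Hf N x <= 2.
Proof.
move=> HN hx hxN; have hn : 10 <= N%:R :> R by rewrite ler_nat.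
have hX : 1 <= x%:R :> R by rewrite (ler_nat R 1 x).
have hXN : x%:R <= N%:R :> R by rewrite ler_nat.
have n0 : 0 < N%:R :> R by lra.
rewrite /Hf ler_pdivlMr // ler_pdivrMr //; split; lra.
Qed.

Lemma surv_bound N (HN : (10 <= N)%N) n (mu : 'I_(N - 3) -> R) :
  (forall x, 0 <= mu x) ->
  @survival R N n mu <= (1 - (N%:R ^+ 3)^-1) ^+ n *
      \sum_(x : 'I_(N - 3) | (x : nat) != 0%N) mu x * Hf N x.
Proof.
have [a0 _] := @a_bounds N HN.
elim: n mu => [|n IH] mu hmu.
  rewrite survival0 expr0 mul1r; apply: ler_sum => x hx.
  have hxN : (x <= N)%N by have := ltn_ord x; lia.
  have hx0 : (0 < x)%N by rewrite lt0n.
  have [h1 _] := @Hf_bounds N x HN hx0 hxN.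
  by rewrite -{1}[mu x]mulr1 ler_wpM2l.
rewrite survivalS; apply: le_trans (IH _ _) _.
  move=> y; apply: sumr_ge0 => x hx; apply: mulr_ge0 => //.
  by apply: checkP_ge0 => //; rewrite lt0n.
rewrite (exprSr (1 - (N%:R ^+ 3)^-1) n) -mulrA; apply: ler_wpM2l; first exact: exprn_ge0.
under eq_bigr do rewrite big_distrl.
rewrite exchange_big /= mulr_sumr; apply: ler_sum => x hx.
under eq_bigr do rewrite -mulrA.
rewrite -mulr_sumr mulrCA; apply: ler_wpM2l => //.
by apply: key => //; rewrite lt0n.
Qed.

End S.

Theorem lemma5p8 (R : realType) :
  exists c : R, 0 < c /\
  exists N0 : nat, forall N : nat, (N0 <= N)%N ->
    forall (n : nat) (mu : 'I_(N - 3) -> R),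
      (forall x, 0 <= mu x) -> \sum_x mu x = 1 ->
      @survival R N n mu <= expR (1 - c * n%:R / (N%:R ^+ 3)).
Proof.
exists 1; split; first lra.
exists 10%N => N HN n mu hmu hsum.
apply: le_trans (@surv_bound R N HN n mu hmu) _.
have [a0 n3] := @a_bounds R N HN.
set a := 1 - (N%:R ^+ 3)^-1.
set S := \sum_(x : 'I_(N - 3) | (x : nat) != 0%N) mu x * Hf R N x.
have S0 : 0 <= S.
  apply: sumr_ge0 => x hx; apply: mulr_ge0 => //.
  have hxN : (x <= N)%N by have := ltn_ord x; lia.
  have hx0 : (0 < x)%N by rewrite lt0n.
  have [h1 _] := @Hf_bounds R N x HN hx0 hxN; lra.
have S2 : S <= expR 1.
  apply: (@le_trans _ _ 2); last by have := expR_ge1Dx (1 : R); lra.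
  apply: (@le_trans _ _ (\sum_x mu x * 2)); last by rewrite -big_distrl /= hsum mul1r.
  rewrite /S big_mkcond /=; apply: ler_sum => x _; case: ifP => hx.
    have hxN : (x <= N)%N by have := ltn_ord x; lia.
    have hx0 : (0 < x)%N by rewrite lt0n hx.
    have [_ h2] := @Hf_bounds R N x HN hx0 hxN.
    by rewrite ler_wpM2l.
  by rewrite mulr_ge0.
have A : a ^+ n <= expR (n%:R * - (N%:R ^+ 3)^-1).
  rewrite expRM_natl; apply: lerXn2r; rewrite ?inE ?a0 //.
    exact: ltW (expR_gt0 _).
  have := expR_ge1Dx (- (N%:R ^+ 3)^-1 : R); rewrite /a; lra.
have -> : 1 - 1 * n%:R / N%:R ^+ 3 = 1 + n%:R * - (N%:R ^+ 3)^-1 :> R.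
  by rewrite mul1r mulrN.
rewrite expRD mulrC; apply: ler_pM => //; exact: exprn_ge0.
Qed.
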